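(* Let $R$ be a commutative associative unital ring, $B$ an $R$-algebra, $\beta$ an $R$-bilinear form on $B$, and $S$ a commutative associative unital $R$-algebra. If $\beta$ is $\mathbf{Aut}(B)$-invariant, then $\beta_S$ is $\mathbf{Aut}(B\otimes_R S)$-invariant. The converse holds if $S$ is faithfully flat over $R$.
   Context: An $R$-algebra is an $R$-module with an $R$-bilinear product (no identities assumed). For an $R$-bilinear form $\beta$ on an $R$-module $M$ and a commutative $R$-algebra $T$, the base change $\beta_T$ is the $T$-bilinear form on $M\otimes_R T$ with $\beta_T(m\otimes t,m'\otimes t')=\beta(m,m')tt'$. For an algebra $C$ over a commutative ring $T_0$ and a $T_0$-bilinear form $\gamma$ on $C$, $\gamma$ is $\mathbf{Aut}(C)$-invariant if for every commutative $T_0$-algebra $T$ and every $T$-algebra automorphism $f$ of $C\otimes_{T_0}T$ one has $\gamma_T(f(x),f(y))=\gamma_T(x,y)$ for all $x,y$. *)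

(* Defs.v *)
From HB Require Import structures.
From mathcomp Require Import all_boot all_order all_algebra.
Set Implicit Arguments. Unset Strict Implicit. Unset Printing Implicit Defensive.
Import GRing.Theory.
Local Open Scope ring_scope.

(* A commutative (associative, unital, possibly zero) K-algebra T is encoded as
   a commutative ring T together with its structure morphism phi : K -> T.   *)

Definition lin (K : pzRingType) (U V : lmodType K) (f : U -> V) : Prop :=
  forall (a : K) (x y : U), f (a *: x + y) = a *: f x + f y.

(* K0-linear maps from a K0-module C into a T-module Q, where T is a K0-algebra
   via phi (Q viewed as a K0-module by restriction of scalars). *)
Definition lin_along (K0 T : comPzRingType) (phi : {rmorphism K0 -> T})
    (C : lmodType K0) (Q : lmodType T) (f : C -> Q) : Prop :=
  forall (a : K0) (x y : C), f (a *: x + y) = phi a *: f x + f y.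

Definition bilin_prod (K : pzRingType) (V : lmodType K) (m : V -> V -> V) : Prop :=
  (forall (a : K) (x y z : V), m (a *: x + y) z = a *: m x z + m y z) /\
  (forall (a : K) (x y z : V), m z (a *: x + y) = a *: m z x + m z y).

Definition bilin_form (K : comPzRingType) (V : lmodType K) (b : V -> V -> K) : Prop :=
  (forall (a : K) (x y z : V), b (a *: x + y) z = a * b x z + b y z) /\
  (forall (a : K) (x y z : V), b z (a *: x + y) = a * b z x + b z y).

(* (P, iota) is the base change C ⊗_{K0} T (iota c = c ⊗ 1), characterized by
   the universal property of extension of scalars. *)
Definition base_change (K0 T : comPzRingType) (phi : {rmorphism K0 -> T})
    (C : lmodType K0) (P : lmodType T) (iota : C -> P) : Prop :=
  lin_along phi iota /\
  forall (Q : lmodType T) (f : C -> Q), lin_along phi f ->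
    (exists g : P -> Q, lin g /\ forall c, g (iota c) = f c) /\
    (forall g g' : P -> Q, lin g -> lin g' ->
       (forall c, g (iota c) = f c) -> (forall c, g' (iota c) = f c) ->
       forall p, g p = g' p).

Definition base_prod (K0 T : comPzRingType) (phi : {rmorphism K0 -> T})
    (C : lmodType K0) (P : lmodType T) (iota : C -> P)
    (mC : C -> C -> C) (mP : P -> P -> P) : Prop :=
  bilin_prod mP /\ forall c c', mP (iota c) (iota c') = iota (mC c c').

Definition base_form (K0 T : comPzRingType) (phi : {rmorphism K0 -> T})
    (C : lmodType K0) (P : lmodType T) (iota : C -> P)
    (b : C -> C -> K0) (bP : P -> P -> T) : Prop :=
  bilin_form bP /\ forall c c', bP (iota c) (iota c') = phi (b c c').

Definition alg_aut (T : comPzRingType) (P : lmodType T) (mP : P -> P -> P)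
    (f : P -> P) : Prop :=
  lin f /\ bijective f /\ forall x y, f (mP x y) = mP (f x) (f y).

Definition aut_invariant (K0 : comPzRingType) (C : lmodType K0)
    (mC : C -> C -> C) (b : C -> C -> K0) : Prop :=
  forall (T : comPzRingType) (phi : {rmorphism K0 -> T}) (P : lmodType T)
         (iota : C -> P) (mP : P -> P -> P) (bP : P -> P -> T),
    base_change phi iota -> base_prod phi iota mC mP -> base_form phi iota b bP ->
    forall f : P -> P, alg_aut mP f -> forall x y, bP (f x) (f y) = bP x y.

Definition flat (R S : comPzRingType) (sigma : {rmorphism R -> S}) : Prop :=
  forall (M N : lmodType R) (u : M -> N) (PM PN : lmodType S)
         (iM : M -> PM) (iN : N -> PN) (uS : PM -> PN),
    lin u -> injective u -> base_change sigma iM -> base_change sigma iN ->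
    lin uS -> (forall m, uS (iM m) = iN (u m)) -> injective uS.

Definition faithfully_flat (R S : comPzRingType) (sigma : {rmorphism R -> S}) : Prop :=
  flat sigma /\
  forall (M : lmodType R) (PM : lmodType S) (iM : M -> PM),
    base_change sigma iM -> (forall p : PM, p = 0) -> forall m : M, m = 0.

(* Main.v *)
Require Import Defs.
From HB Require Import structures.
From mathcomp Require Import all_boot all_order all_algebra.
From Stdlib Require Import ClassicalEpsilon.
Set Implicit Arguments. Unset Strict Implicit. Unset Printing Implicit Defensive.
Import GRing.Theory.
Local Open Scope ring_scope.

Definition restr (K T : comPzRingType) (phi : {rmorphism K -> T}) (Q : lmodType T) : Type := Q.
Arguments restr {K T} phi Q.
Section Restr.
Variables (K T : comPzRingType) (phi : {rmorphism K -> T}) (Q : lmodType T).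
HB.instance Definition _ := GRing.Zmodule.on (restr phi Q).
Definition rscale (k : K) (q : restr phi Q) : restr phi Q := (phi k) *: (q : Q).
Lemma rscaleA a b v : rscale a (rscale b v) = rscale (a * b) v.
Proof. by rewrite /rscale scalerA rmorphM. Qed.
Lemma rscale1 : left_id 1 rscale.
Proof. by move=> v; rewrite /rscale rmorph1 scale1r. Qed.
Lemma rscaleDr : right_distributive rscale +%R.
Proof. by move=> a u v; rewrite /rscale scalerDr. Qed.
Lemma rscaleDl v : {morph rscale^~ v: a b / a + b}.
Proof. by move=> a b; rewrite /rscale rmorphD scalerDl. Qed.
HB.instance Definition _ := GRing.Zmodule_isLmodule.Build K (restr phi Q) rscaleA rscale1 rscaleDr rscaleDl.
End Restr.


Definition pb (P : Prop) : bool := if excluded_middle_informative P then true else false.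
Lemma pbP (P : Prop) : reflect P (pb P).
Proof. by rewrite /pb; case: excluded_middle_informative => h; constructor. Qed.

Lemma lin_add (K : pzRingType) (U V : lmodType K) (g : U -> V) : lin g -> forall x y, g (x + y) = g x + g y.
Proof. by move=> hg x y; have := hg 1 x y; rewrite !scale1r. Qed.
Lemma lin_0 (K : pzRingType) (U V : lmodType K) (g : U -> V) : lin g -> g 0 = 0.
Proof. by move=> hg; apply: (@addrI _ (g 0)); rewrite -lin_add // !addr0. Qed.

Section Tens.
Variables (K T : comPzRingType) (phi : {rmorphism K -> T}) (M : lmodType K).
Definition fs := seq (T * M).
Definition evf (Q : lmodType T) (f : M -> Q) (x : fs) : Q := \sum_(p <- x) p.1 *: f p.2.
Definition eqv (x y : fs) : Prop :=
  forall (Q : lmodType T) (f : M -> Q), lin_along phi f -> evf f x = evf f y.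
Definition eqvb x y := pb (eqv x y).
Lemma ex_canon (x : fs) : exists y, eqvb y x.
Proof. by exists x; apply/pbP. Qed.
Definition canon x := xchoose (ex_canon x).
Lemma canonE x : eqv (canon x) x.
Proof. exact/pbP/(xchooseP (ex_canon x)). Qed.
Lemma canon_eq x y : eqv x y -> canon x = canon y.
Proof.
move=> h; apply: eq_xchoose => z; apply/pbP/pbP => hz Q f hf.
  by rewrite (hz Q f hf) (h Q f hf).
by rewrite (hz Q f hf) (h Q f hf).
Qed.
Definition tens := {x : fs | canon x == x}.
HB.instance Definition _ := Choice.on tens.
Definition cls (x : fs) : tens := exist _ (canon x) (introT eqP (canon_eq (canonE x))).
Lemma clsK (t : tens) : cls (val t) = t.
Proof. by apply: val_inj => /=; apply/eqP; case: t. Qed.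
Lemma cls_eq x y : eqv x y -> cls x = cls y.
Proof. by move=> h; apply: val_inj => /=; apply: canon_eq. Qed.

Section Ev.
Variables (Q : lmodType T) (f : M -> Q) (hf : lin_along phi f).
Lemma evf_cat x y : evf f (x ++ y) = evf f x + evf f y.
Proof. by rewrite /evf big_cat. Qed.
Lemma evf_nil : evf f [::] = 0.
Proof. by rewrite /evf big_nil. Qed.
Lemma evf_cons p x : evf f (p :: x) = p.1 *: f p.2 + evf f x.
Proof. by rewrite /evf big_cons. Qed.
Lemma evf_opp x : evf f [seq (- p.1, p.2) | p <- x] = - evf f x.
Proof. by rewrite /evf big_map -sumrN; apply: eq_bigr => p _; rewrite scaleNr. Qed.
Lemma evf_scl a x : evf f [seq (a * p.1, p.2) | p <- x] = a *: evf f x.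
Proof. by rewrite /evf big_map scaler_sumr; apply: eq_bigr => p _; rewrite scalerA. Qed.
Lemma evf_cls x : evf f (val (cls x)) = evf f x.
Proof. by have := canonE x; apply. Qed.
End Ev.

Definition tadd (t u : tens) := cls (val t ++ val u).
Definition tzero := cls [::].
Definition topp (t : tens) := cls [seq (- p.1, p.2) | p <- val t].
Definition tscl (a : T) (t : tens) := cls [seq (a * p.1, p.2) | p <- val t].

Ltac ev := apply: cls_eq => ???; match goal with h : lin_along _ _ |- _ =>
  rewrite ?(evf_cat, evf_nil, evf_opp, evf_scl, evf_cls h, evf_cons) end.

Lemma taddA : associative tadd.
Proof. by move=> x y z; ev; rewrite addrA. Qed.
Lemma taddC : commutative tadd.
Proof. by move=> x y; ev; rewrite addrC. Qed.
Lemma tadd0 : left_id tzero tadd.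
Proof. by move=> x; rewrite -[RHS]clsK; ev; rewrite add0r. Qed.
Lemma taddN : left_inverse tzero topp tadd.
Proof. by move=> x; ev; rewrite addNr. Qed.
HB.instance Definition _ := GRing.isZmodule.Build tens taddA taddC tadd0 taddN.
Lemma tsclA a b v : tscl a (tscl b v) = tscl (a * b) v.
Proof. by ev; rewrite scalerA. Qed.
Lemma tscl1 : left_id 1 tscl.
Proof. by move=> x; rewrite -[RHS]clsK; ev; rewrite scale1r. Qed.
Lemma tsclDr : right_distributive tscl +%R.
Proof. by move=> a x y; ev; rewrite scalerDr. Qed.
Lemma tsclDl v : {morph tscl^~ v: a b / a + b}.
Proof. by move=> a b; ev; rewrite scalerDl. Qed.
HB.instance Definition _ := GRing.Zmodule_isLmodule.Build T tens tsclA tscl1 tsclDr tsclDl.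

Definition tiota (m : M) : tens := cls [:: (1, m)].

Lemma cls_cons p x : cls (p :: x) = p.1 *: tiota p.2 + cls x.
Proof. by rewrite /tiota; ev; rewrite /= addr0 scale1r. Qed.
Lemma cls_nil : cls [::] = 0.
Proof. by []. Qed.

Lemma tens_bc : base_change phi tiota.
Proof.
split.
  move=> a m m'; rewrite /tiota; ev; rewrite /= !addr0 !scale1r.
  by match goal with h : lin_along _ _ |- _ => rewrite h end.
move=> Q f hf; split.
  exists (fun t => evf f (val t)); split.
    by move=> a t u /=; rewrite evf_cls // evf_cat evf_cls // evf_scl.
  by move=> m; rewrite evf_cls // evf_cons evf_nil addr0 scale1r.
suff H : forall g : tens -> Q, lin g -> (forall c, g (tiota c) = f c) ->
  forall p, g p = evf f (val p).
  by move=> g g' hg hg' e e' p; rewrite (H g) // (H g').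
move=> g hg e t; rewrite -{1}(clsK t); elim: (val t) => [|p x IH].
  by rewrite cls_nil lin_0 // evf_nil.
by rewrite cls_cons hg e IH evf_cons.
Qed.
End Tens.
Arguments tens {K T} phi M.
Arguments tiota {K T} phi M.

Section Generic.
Variables (K T : comPzRingType) (phi : {rmorphism K -> T}) (C : lmodType K) (P : lmodType T)
  (iota : C -> P) (hbc : base_change phi iota).

Lemma lin_along_comp (Q : lmodType T) (j : C -> P) (g : P -> Q) :
  lin_along phi j -> lin g -> lin_along phi (fun x => g (j x)).
Proof. by move=> hj hg a x y; rewrite hj hg. Qed.

Lemma bc_unique (Q : lmodType T) (g g' : P -> Q) : lin g -> lin g' ->
  (forall c, g (iota c) = g' (iota c)) -> forall p, g p = g' p.
Proof.
move=> hg hg' e; have hf : lin_along phi (fun c => g (iota c)).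
  exact: lin_along_comp hbc.1 hg.
by apply: ((hbc.2 Q _ hf).2 g g' hg hg') => // c; rewrite e.
Qed.

Lemma bc_ext (Q : lmodType T) (f : C -> Q) : lin_along phi f ->
  {g : P -> Q | lin g /\ forall c, g (iota c) = f c}.
Proof. by move=> hf; apply: constructive_indefinite_description; case: (hbc.2 Q f hf). Qed.
End Generic.

Lemma bc_trans (K T U : comPzRingType) (a : {rmorphism K -> T}) (b : {rmorphism T -> U})
  (c : {rmorphism K -> U}) (hc : forall k, c k = b (a k)) (C : lmodType K) (P : lmodType T)
  (P2 : lmodType U) (i1 : C -> P) (i2 : P -> P2) :
  base_change a i1 -> base_change b i2 -> base_change c (fun x => i2 (i1 x)).
Proof.
move=> h1 h2; split.
  by move=> k x y; rewrite h1.1 h2.1 hc.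
move=> Q f hf; split.
  have hf' : lin_along a (f : C -> restr b Q).
    by move=> k x y; rewrite hf hc.
  case: (bc_ext h1 hf') => h [hh eh].
  have hh' : lin_along b (h : P -> Q) by [].
  case: (bc_ext h2 hh') => g [hg eg].
  by exists g; split => // x; rewrite eg eh.
move=> g g' hg hg' e e'.
apply: (bc_unique h2) => // p.
have l1 : lin ((fun p => g (i2 p)) : P -> restr b Q) by apply: lin_along_comp h2.1 hg.
have l2 : lin ((fun p => g' (i2 p)) : P -> restr b Q) by apply: lin_along_comp h2.1 hg'.
by apply: (bc_unique h1 l1 l2) => x; rewrite e e'.
Qed.

Lemma dir1 (R : comPzRingType) (B : lmodType R) (mB : B -> B -> B)
    (beta : B -> B -> R) (S : comPzRingType) (sigma : {rmorphism R -> S})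
    (BS : lmodType S) (iota : B -> BS) (mBS : BS -> BS -> BS) (betaS : BS -> BS -> S) :
  base_change sigma iota -> base_prod sigma iota mB mBS ->
  base_form sigma iota beta betaS ->
  aut_invariant mB beta -> aut_invariant mBS betaS.
Proof.
move=> hbc hbp hbf inv T phi P iota' mP bP hbc' hbp' hbf' f haut x y.
apply: (inv T (phi \o sigma) P (fun b => iota' (iota b)) mP bP) => //.
- exact: bc_trans.
- by split; [exact: hbp'.1 | move=> c c'; rewrite hbp'.2 hbp.2].
- by split; [exact: hbf'.1 | move=> c c'; rewrite hbf'.2 hbf.2].
Qed.

Lemma la_add (K T : comPzRingType) (phi : {rmorphism K -> T}) (C : lmodType K) (Q : lmodType T)
  (f : C -> Q) : lin_along phi f -> forall x y, f (x + y) = f x + f y.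
Proof. by move=> hf x y; have := hf 1 x y; rewrite scale1r rmorph1 scale1r. Qed.
Lemma la_0 (K T : comPzRingType) (phi : {rmorphism K -> T}) (C : lmodType K) (Q : lmodType T)
  (f : C -> Q) : lin_along phi f -> f 0 = 0.
Proof. by move=> hf; apply: (@addrI _ (f 0)); rewrite -(la_add hf) !addr0. Qed.
Lemma la_B (K T : comPzRingType) (phi : {rmorphism K -> T}) (C : lmodType K) (Q : lmodType T)
  (f : C -> Q) : lin_along phi f -> forall x y, f (x - y) = f x - f y.
Proof.
move=> hf x y; apply: (@addIr _ (f y)); rewrite -(la_add hf) subrK.
by rewrite -addrA addNr addr0.
Qed.

Section TRing.
Variables (R S : comPzRingType) (sigma : {rmorphism R -> S}) (T : comPzRingType)
  (phi : {rmorphism R -> T}).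
Definition MT := restr phi T^o.
Definition tm (u v : MT) : MT := @GRing.mul T u v.
Lemma tm_lin (v : MT) (a : R) (u u' : MT) : tm (a *: u + u') v = a *: tm u v + tm u' v.
Proof. by rewrite /tm; change ((phi a * u + u') * v = phi a * (u * v) + u' * v :> T); rewrite mulrDl mulrA. Qed.

Definition Tp := tens sigma MT.
HB.instance Definition _ := GRing.Lmodule.on Tp.
Definition mulseq (x y : fs S MT) : fs S MT := [seq (p.1 * q.1, tm p.2 q.2) | p <- x, q <- y].

Section Ev.
Variables (Q : lmodType S) (f : MT -> Q) (hf : lin_along sigma f).
Lemma evf_mul x y : evf f (mulseq x y) = \sum_(p <- x) \sum_(q <- y) (p.1 * q.1) *: f (tm p.2 q.2).
Proof. by rewrite /evf big_allpairs_dep. Qed.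
Lemma evf_mul_l x y : evf f (mulseq x y) = \sum_(q <- y) q.1 *: evf (fun u => f (tm u q.2)) x.
Proof.
rewrite evf_mul exchange_big; apply: eq_bigr => q _; rewrite /evf scaler_sumr.
by apply: eq_bigr => p _; rewrite scalerA mulrC.
Qed.
Lemma evf_mulC x y : evf f (mulseq x y) = evf f (mulseq y x).
Proof.
rewrite !evf_mul exchange_big; apply: eq_bigr => q _; apply: eq_bigr => p _.
by congr (_ *: f _); [exact: mulrC | rewrite /tm mulrC].
Qed.
End Ev.

Lemma eqv_mull x x' y : eqv sigma x x' -> eqv sigma (mulseq x y) (mulseq x' y).
Proof.
move=> h Q f hf; rewrite !evf_mul_l; apply: eq_bigr => q _; congr (_ *: _).
apply: h => a u u'; rewrite tm_lin; exact: hf.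
Qed.
Lemma eqv_mulr x y y' : eqv sigma y y' -> eqv sigma (mulseq x y) (mulseq x y').
Proof. by move=> h Q f hf; rewrite evf_mulC (eqv_mull _ h) // evf_mulC. Qed.

Lemma evf_clsl (Q : lmodType S) (f : MT -> Q) (hf : lin_along sigma f) x y :
  evf f (mulseq (val (cls sigma x)) y) = evf f (mulseq x y).
Proof. by move: (canonE (phi:=sigma) x) => /(eqv_mull y); apply. Qed.
Lemma evf_clsr (Q : lmodType S) (f : MT -> Q) (hf : lin_along sigma f) x y :
  evf f (mulseq x (val (cls sigma y))) = evf f (mulseq x y).
Proof. by move: (canonE (phi:=sigma) y) => /(eqv_mulr x); apply. Qed.

Definition tmul (t u : Tp) : Tp := cls sigma (mulseq (val t) (val u)).
Definition tone : Tp := cls sigma [:: (1, (1 : T) : MT)].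

Lemma tmulA : associative tmul.
Proof.
move=> a b c; apply: cls_eq => Q f hf; rewrite evf_clsl // evf_clsr //.
rewrite !evf_mul !big_allpairs_dep; apply: eq_bigr => p _; rewrite !big_allpairs_dep.
apply: eq_bigr => q _; apply: eq_bigr => r _; rewrite /= mulrA; congr (_ *: f _).
by rewrite /tm mulrA.
Qed.
Lemma tmulC : commutative tmul.
Proof. by move=> a b; apply: cls_eq => Q f hf; rewrite evf_mulC. Qed.
Lemma tmul1 : left_id tone tmul.
Proof.
move=> a; rewrite -[RHS]clsK; apply: cls_eq => Q f hf; rewrite evf_clsl //.
rewrite evf_mul big_cons big_nil addr0 /evf; apply: eq_bigr => q _.
by rewrite mul1r /tm mul1r.
Qed.
Lemma tmulDl : left_distributive tmul +%R.
Proof.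
move=> a b c; apply: cls_eq => Q f hf.
change (evf f (mulseq (val (cls sigma (val a ++ val b))) (val c)) =
  evf f (val (cls sigma (mulseq (val a) (val c))) ++ val (cls sigma (mulseq (val b) (val c))))).
rewrite evf_clsl // evf_cat !evf_cls // !evf_mul big_cat //.
Qed.
HB.instance Definition _ := GRing.Zmodule_isComPzRing.Build Tp tmulA tmulC tmul1 tmulDl.

Definition psi (t : T) : Tp := tiota sigma MT t.
Lemma psi_la : lin_along sigma (psi : MT -> Tp).
Proof. exact: (tens_bc sigma MT).1. Qed.
Lemma psi_zmod : zmod_morphism psi.
Proof. by move=> x y; rewrite /psi (la_B (tens_bc sigma MT).1). Qed.
HB.instance Definition _ := GRing.isZmodMorphism.Build T Tp psi psi_zmod.
Lemma psi_mon : monoid_morphism psi.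
Proof.
split; first by [].
move=> x y; apply: cls_eq => Q f hf.
rewrite evf_clsl // evf_clsr // evf_mul !big_cons !big_nil !addr0 /evf big_cons big_nil addr0.
by rewrite mulr1.
Qed.
HB.instance Definition _ := GRing.isMonoidMorphism.Build T Tp psi psi_mon.

Definition phi' (s : S) : Tp := cls sigma [:: (s, (1 : T) : MT)].
Lemma phi'_zmod : zmod_morphism phi'.
Proof.
move=> x y; apply: cls_eq => Q f hf; rewrite /= evf_cat !evf_cls // evf_opp !evf_cls //.
by rewrite /evf !big_cons !big_nil !addr0 scalerBl.
Qed.
HB.instance Definition _ := GRing.isZmodMorphism.Build S Tp phi' phi'_zmod.
Lemma phi'_mon : monoid_morphism phi'.
Proof.
split; first by [].
move=> x y; apply: cls_eq => Q f hf.
rewrite evf_clsl // evf_clsr // evf_mul !big_cons !big_nil !addr0 /evf big_cons big_nil addr0.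
by rewrite /tm mulr1.
Qed.
HB.instance Definition _ := GRing.isMonoidMorphism.Build S Tp phi' phi'_mon.

Lemma psi_phi r : psi (phi r) = phi' (sigma r).
Proof.
apply: cls_eq => Q f hf; rewrite /evf !big_cons !big_nil !addr0 scale1r.
have := hf r (1 : T) 0; rewrite (la_0 hf) !addr0 /= => <-.
by congr (f _); change (phi r = phi r * 1); rewrite mulr1.
Qed.
End TRing.

Section Inj.
Variables (R S : comPzRingType) (sigma : {rmorphism R -> S}) (T : comPzRingType)
  (phi : {rmorphism R -> T}) (d : T).
Definition Npred (t : MT phi) : bool := pb (exists r, (t : T) = phi r * d).
Definition N := {t : MT phi | Npred t}.
HB.instance Definition _ := Choice.on N.
Lemma Npred0 : Npred 0.
Proof. by apply/pbP; exists 0; rewrite rmorph0 mul0r. Qed.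
Lemma NpredD (a : R) x y : Npred x -> Npred y -> Npred (a *: x + y).
Proof.
move=> /pbP [r hr] /pbP [r' hr']; apply/pbP; exists (a * r + r').
change (phi a * (x : T) + y = phi (a * r + r') * d).
by rewrite hr hr' rmorphD rmorphM mulrDl mulrA.
Qed.
Definition nzero : N := exist _ 0 Npred0.
Definition nscl (a : R) (x : N) : N := exist _ (a *: val x) (eq_ind _ Npred (NpredD a (valP x) Npred0) _ (addr0 _)).
Definition nadd (x y : N) : N := exist _ (val x + val y) (eq_ind _ Npred (NpredD 1 (valP x) (valP y)) _ (congr1 (fun z => z + _) (scale1r _))).
Definition nopp (x : N) : N := nscl (-1) x.
Lemma naddA : associative nadd.
Proof. by move=> x y z; apply: val_inj; rewrite /= addrA. Qed.
Lemma naddC : commutative nadd.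
Proof. by move=> x y; apply: val_inj; rewrite /= addrC. Qed.
Lemma nadd0 : left_id nzero nadd.
Proof. by move=> x; apply: val_inj; rewrite /= add0r. Qed.
Lemma naddN : left_inverse nzero nopp nadd.
Proof. by move=> x; apply: val_inj; rewrite /= scaleN1r addNr. Qed.
HB.instance Definition _ := GRing.isZmodule.Build N naddA naddC nadd0 naddN.
Lemma nsclA a b v : nscl a (nscl b v) = nscl (a * b) v.
Proof. by apply: val_inj; rewrite /= scalerA. Qed.
Lemma nscl1 : left_id 1 nscl.
Proof. by move=> x; apply: val_inj; rewrite /= scale1r. Qed.
Lemma nsclDr : right_distributive nscl +%R.
Proof. by move=> a x y; apply: val_inj; rewrite /= scalerDr. Qed.
Lemma nsclDl v : {morph nscl^~ v: a b / a + b}.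
Proof. by move=> a b; apply: val_inj; rewrite /= scalerDl. Qed.
HB.instance Definition _ := GRing.Zmodule_isLmodule.Build R N nsclA nscl1 nsclDr nsclDl.

Lemma psi_inj_aux : faithfully_flat sigma -> psi sigma phi d = 0 -> d = 0.
Proof.
move=> [hflat hfaith] hd.
have hu : lin (val : N -> MT phi) by [].
have hla : lin_along sigma (fun n : N => tiota sigma (MT phi) (val n)).
  by move=> a x y; rewrite (tens_bc sigma (MT phi)).1.
case: (bc_ext (tens_bc sigma N) hla) => uS [huS euS].
have inj := hflat N (MT phi) val (tens sigma N) (tens sigma (MT phi))
  (tiota sigma N) (tiota sigma (MT phi)) uS hu val_inj (tens_bc sigma N)
  (tens_bc sigma (MT phi)) huS euS.
have z : forall p, uS p = 0.
  have h0 : lin (fun _ : tens sigma N => (0 : tens sigma (MT phi))).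
    by move=> ???; rewrite scaler0 addr0.
  apply: (bc_unique (tens_bc sigma N) huS h0) => n; rewrite euS.
  case/pbP: (valP n) => r hr.
  by change (psi sigma phi (val n) = 0); rewrite hr (psi_mon sigma phi).2 hd mulr0.
have all0 : forall p : tens sigma N, p = 0.
  by move=> p; apply: inj; rewrite z (lin_0 huS).
have hdN : Npred d by apply/pbP; exists 1; rewrite rmorph1 mul1r.
have := hfaith N (tens sigma N) (tiota sigma N) (tens_bc sigma N) all0 (exist _ d hdN).
by move/(congr1 val).
Qed.
End Inj.

Lemma psi_inj (R S : comPzRingType) (sigma : {rmorphism R -> S}) (T : comPzRingType)
  (phi : {rmorphism R -> T}) : faithfully_flat sigma -> forall x y : T,
  psi sigma phi x = psi sigma phi y -> x = y.
Proof.
move=> hff x y e; apply/eqP; rewrite -subr_eq0; apply/eqP; apply: (@psi_inj_aux R S sigma T phi _ hff).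
by rewrite (psi_zmod sigma phi) e subrr.
Qed.

Lemma lin_comb (T : comPzRingType) (U V : lmodType T) (g g' : U -> V) (a : T) :
  lin g -> lin g' -> lin (fun y => a *: g y + g' y).
Proof.
move=> hg hg' b x y; rewrite hg hg' scalerDr !scalerA mulrC -!scalerA.
by rewrite addrACA -scalerDr.
Qed.

Lemma lin_compose (T : comPzRingType) (U V W : lmodType T) (g : U -> V) (h : V -> W) :
  lin g -> lin h -> lin (fun x => h (g x)).
Proof. by move=> hg hh a x y; rewrite hg hh. Qed.

Lemma lin_along_compl (K T : comPzRingType) (phi : {rmorphism K -> T}) (C : lmodType K)
  (P : lmodType T) (g : C -> C) (j : C -> P) : lin g -> lin_along phi j -> lin_along phi (fun x => j (g x)).
Proof. by move=> hg hj a x y; rewrite hg hj. Qed.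

Section Bilin.
Variables (K T : comPzRingType) (phi : {rmorphism K -> T}) (C : lmodType K) (P : lmodType T)
  (iota : C -> P) (hbc : base_change phi iota).

Lemma bc_unique2 (Q : lmodType T) (m1 m2 : P -> P -> Q) :
  (forall x, lin (m1 x)) -> (forall y, lin (fun x => m1 x y)) ->
  (forall x, lin (m2 x)) -> (forall y, lin (fun x => m2 x y)) ->
  (forall c c', m1 (iota c) (iota c') = m2 (iota c) (iota c')) -> forall x y, m1 x y = m2 x y.
Proof.
move=> h1 h1' h2 h2' e x y.
have ey : forall c, m1 (iota c) y = m2 (iota c) y.
  by move=> c; apply: (bc_unique hbc (h1 _) (h2 _)) => c'; apply: e.
exact: (bc_unique hbc (h1' y) (h2' y)).
Qed.

Lemma bc_bilin (Q : lmodType T) (m : C -> C -> Q) :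
  (forall c, lin_along phi (m c)) -> (forall c', lin_along phi (fun c => m c c')) ->
  {mP : P -> P -> Q | [/\ (forall x, lin (mP x)), (forall y, lin (fun x => mP x y)) &
     forall c c', mP (iota c) (iota c') = m c c']}.
Proof.
move=> h1 h2.
pose L c := sval (bc_ext hbc (h1 c)).
have hL c : lin (L c) by case: (svalP (bc_ext hbc (h1 c))) => ? _.
have eL c c' : L c (iota c') = m c c' by case: (svalP (bc_ext hbc (h1 c))) => _; apply.
have hLy y : lin_along phi (fun c => L c y).
  move=> a c c'; apply: (bc_unique hbc (hL _) (lin_comb (phi a) (hL c) (hL c'))) => c''.
  by rewrite !eL h2.
pose Nn y := sval (bc_ext hbc (hLy y)).
have hN y : lin (Nn y) by case: (svalP (bc_ext hbc (hLy y))) => ? _.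
have eN y c : Nn y (iota c) = L c y by case: (svalP (bc_ext hbc (hLy y))) => _; apply.
exists (fun x y => Nn y x); split => //.
  move=> x a y y'.
  apply: (bc_unique hbc (hN _) (lin_comb a (hN y) (hN y'))) => c.
  by rewrite !eN hL.
by move=> c c'; rewrite eN eL.
Qed.
End Bilin.

Section Dir2.
Variables (R : comPzRingType) (B : lmodType R) (mB : B -> B -> B) (beta : B -> B -> R)
  (S : comPzRingType) (sigma : {rmorphism R -> S}) (BS : lmodType S) (iota : B -> BS)
  (mBS : BS -> BS -> BS) (betaS : BS -> BS -> S).
Hypotheses (hbc : base_change sigma iota) (hbp : base_prod sigma iota mB mBS)
  (hbf : base_form sigma iota beta betaS).
Variables (T : comPzRingType) (phi : {rmorphism R -> T}) (P : lmodType T) (iP : B -> P)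
  (mP : P -> P -> P) (bP : P -> P -> T).
Hypotheses (hbcP : base_change phi iP) (hbpP : base_prod phi iP mB mP)
  (hbfP : base_form phi iP beta bP).
Variables (f : P -> P) (haut : alg_aut mP f).

Let Tq := Tp sigma phi.
Let ps : {rmorphism T -> Tq} := psi sigma phi.
Let ph : {rmorphism S -> Tq} := phi' sigma phi.
Lemma ps_ph r : ps (phi r) = ph (sigma r).
Proof. exact: psi_phi. Qed.
Let P' := tens ps P.
Let iP' : P -> P' := tiota ps P.
Let hbc' : base_change ps iP' := tens_bc ps P.

Lemma hj0 : lin_along sigma ((fun b => iP' (iP b)) : B -> restr ph P').
Proof.
move=> a x y; rewrite hbcP.1 hbc'.1.
change (ps (phi a) *: iP' (iP x) + iP' (iP y) = ph (sigma a) *: iP' (iP x) + iP' (iP y)).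
by rewrite ps_ph.
Qed.

Definition j : BS -> P' := sval (bc_ext hbc hj0).
Lemma hj : lin_along ph j.
Proof. by case: (svalP (bc_ext hbc hj0)). Qed.
Lemma ej b : j (iota b) = iP' (iP b).
Proof. by case: (svalP (bc_ext hbc hj0)) => _; apply. Qed.

Lemma hmP1 c : lin_along ps (fun c' => iP' (mP c c')).
Proof. by move=> a x y; rewrite hbpP.1.2 hbc'.1. Qed.
Lemma hmP2 c' : lin_along ps (fun c => iP' (mP c c')).
Proof. by move=> a x y; rewrite hbpP.1.1 hbc'.1. Qed.
Definition mP' : P' -> P' -> P' := sval (bc_bilin hbc' hmP1 hmP2).
Lemma hm1 x : lin (mP' x).
Proof. by case: (svalP (bc_bilin hbc' hmP1 hmP2)). Qed.
Lemma hm2 y : lin (fun x => mP' x y).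
Proof. by case: (svalP (bc_bilin hbc' hmP1 hmP2)). Qed.
Lemma em c c' : mP' (iP' c) (iP' c') = iP' (mP c c').
Proof. by case: (svalP (bc_bilin hbc' hmP1 hmP2)). Qed.

Lemma hbP1 c : lin_along ps ((fun c' => ps (bP c c')) : P -> Tq^o).
Proof. by move=> a x y; rewrite hbfP.1.2 rmorphD rmorphM. Qed.
Lemma hbP2 c' : lin_along ps ((fun c => ps (bP c c')) : P -> Tq^o).
Proof. by move=> a x y; rewrite hbfP.1.1 rmorphD rmorphM. Qed.
Definition bP' : P' -> P' -> Tq^o := sval (bc_bilin hbc' hbP1 hbP2).
Lemma hb1 x : lin (bP' x).
Proof. by case: (svalP (bc_bilin hbc' hbP1 hbP2)). Qed.
Lemma hb2 y : lin (fun x => bP' x y).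
Proof. by case: (svalP (bc_bilin hbc' hbP1 hbP2)). Qed.
Lemma eb c c' : bP' (iP' c) (iP' c') = ps (bP c c').
Proof. by case: (svalP (bc_bilin hbc' hbP1 hbP2)). Qed.

Lemma bc_j : base_change ph j.
Proof.
split; first exact: hj.
move=> Q F hF; split.
  have hF' : lin_along phi ((fun b => F (iota b)) : B -> restr ps Q).
    move=> a x y; rewrite hbc.1 hF.
    change (ph (sigma a) *: F (iota x) + F (iota y) = ps (phi a) *: F (iota x) + F (iota y)).
    by rewrite ps_ph.
  case: (bc_ext hbcP hF') => h [hh eh].
  have hh' : lin_along ps (h : P -> Q) by [].
  case: (bc_ext hbc' hh') => g [hg eg].
  exists g; split => //.
  have l1 : lin ((fun c => g (j c)) : BS -> restr ph Q) by apply: lin_along_comp hj hg.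
  have l2 : lin (F : BS -> restr ph Q) by [].
  by apply: (bc_unique hbc l1 l2) => b; rewrite ej eg eh.
move=> g g' hg hg' e e'.
apply: (bc_unique hbc') => // p.
have l1 : lin ((fun p => g (iP' p)) : P -> restr ps Q) by apply: lin_along_comp hbc'.1 hg.
have l2 : lin ((fun p => g' (iP' p)) : P -> restr ps Q) by apply: lin_along_comp hbc'.1 hg'.
by apply: (bc_unique hbcP l1 l2) => b /=; rewrite -ej e e'.
Qed.

Lemma bp_j : base_prod ph j mBS mP'.
Proof.
split; first by split => a x y z; [exact: hm2 | exact: hm1].
have l1 c : lin ((fun c' => mP' (j c) (j c')) : BS -> restr ph P').
  exact: lin_along_comp hj (hm1 _).
have l2 c' : lin ((fun c => mP' (j c) (j c')) : BS -> restr ph P').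
  exact: lin_along_comp hj (hm2 _).
have l3 c : lin ((fun c' => j (mBS c c')) : BS -> restr ph P').
  by apply: lin_along_compl hj => a x y; exact: hbp.1.2.
have l4 c' : lin ((fun c => j (mBS c c')) : BS -> restr ph P').
  by apply: lin_along_compl hj => a x y; exact: hbp.1.1.
move=> c c'; apply: (bc_unique2 hbc l1 l2 l3 l4) => b b'.
by rewrite !ej em hbpP.2 -ej hbp.2.
Qed.

Lemma bf_j : base_form ph j betaS bP'.
Proof.
split; first by split => a x y z; [exact: hb2 | exact: hb1].
have l1 c : lin ((fun c' => bP' (j c) (j c')) : BS -> restr ph Tq^o).
  exact: lin_along_comp hj (hb1 _).
have l2 c' : lin ((fun c => bP' (j c) (j c')) : BS -> restr ph Tq^o).
  exact: lin_along_comp hj (hb2 _).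
have l3 c : lin ((fun c' => ph (betaS c c')) : BS -> restr ph Tq^o).
  by move=> a x y; rewrite hbf.1.2 rmorphD rmorphM.
have l4 c' : lin ((fun c => ph (betaS c c')) : BS -> restr ph Tq^o).
  by move=> a x y; rewrite hbf.1.1 rmorphD rmorphM.
move=> c c'; apply: (bc_unique2 hbc l1 l2 l3 l4) => b b'.
by rewrite !ej eb hbfP.2 hbf.2 ps_ph.
Qed.

Lemma hf0 : lin_along ps (fun p => iP' (f p)).
Proof. exact: lin_along_compl haut.1 hbc'.1. Qed.
Definition f' : P' -> P' := sval (bc_ext hbc' hf0).
Lemma hf' : lin f'.
Proof. by case: (svalP (bc_ext hbc' hf0)). Qed.
Lemma ef' p : f' (iP' p) = iP' (f p).
Proof. by case: (svalP (bc_ext hbc' hf0)) => _; apply. Qed.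

Lemma aut' : alg_aut mP' f'.
Proof.
case: haut => hfl [[g fK gK] hfm].
have hg : lin g.
  by move=> a x y; rewrite -{1}(gK x) -{1}(gK y) -hfl fK.
have hg0 : lin_along ps (fun p => iP' (g p)) by exact: lin_along_compl hg hbc'.1.
case: (bc_ext hbc' hg0) => g' [hg' eg'].
have hid : lin (fun x : P' => x) by [].
split; first exact: hf'.
split.
  exists g' => x.
    have := bc_unique hbc' (lin_compose hf' hg') hid; apply => p.
    by rewrite ef' eg' fK.
  have := bc_unique hbc' (lin_compose hg' hf') hid; apply => p.
  by rewrite eg' ef' gK.
move=> x y.
have l1 x0 : lin (fun y0 => f' (mP' x0 y0)) by exact: lin_compose (hm1 _) hf'.
have l2 y0 : lin (fun x0 => f' (mP' x0 y0)) by exact: lin_compose (hm2 _) hf'.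
have l3 x0 : lin (fun y0 => mP' (f' x0) (f' y0)) by exact: lin_compose hf' (hm1 _).
have l4 y0 : lin (fun x0 => mP' (f' x0) (f' y0)) by exact: lin_compose hf' (hm2 (f' y0)).
apply: (bc_unique2 hbc' l1 l2 l3 l4) => c c'.
by rewrite em !ef' hfm em.
Qed.

Lemma dir2_main : faithfully_flat sigma -> aut_invariant mBS betaS ->
  forall x y, bP (f x) (f y) = bP x y.
Proof.
move=> hff hinv x y.
have := hinv Tq ph P' j mP' bP' bc_j bp_j bf_j f' aut' (iP' x) (iP' y).
rewrite !ef' !eb => h; apply: (@psi_inj _ _ sigma _ phi hff); exact: h.
Qed.
End Dir2.

Unset Implicit Arguments.
Theorem lemma5p3 (R : comPzRingType) (B : lmodType R) (mB : B -> B -> B)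
    (beta : B -> B -> R) (S : comPzRingType) (sigma : {rmorphism R -> S})
    (BS : lmodType S) (iota : B -> BS) (mBS : BS -> BS -> BS) (betaS : BS -> BS -> S) :
  bilin_prod mB -> bilin_form beta ->
  base_change sigma iota -> base_prod sigma iota mB mBS ->
  base_form sigma iota beta betaS ->
  (aut_invariant mB beta -> aut_invariant mBS betaS) /\
  (faithfully_flat sigma -> aut_invariant mBS betaS -> aut_invariant mB beta).
Proof.
move=> _ _ hbc hbp hbf; split; first exact: (dir1 hbc hbp hbf).
move=> hff hinv T phi P iP mP bP hbcP hbpP hbfP f haut.
exact: (dir2_main hbc hbp hbf hbcP hbpP hbfP haut hff hinv).
Qed.
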